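(* Let $\underline{\xi}=(\xi_i)_{i\ge 0}$ be a sequence of real numbers with $\xi_0=1$. Let $(r_n)_{n\ge 0}$ be a non-decreasing sequence of positive integers, and let $(Q_n)_{n\ge 0}$, $(A_n)_{n\ge 0}$, $(B_n)_{n\ge 0}$ be sequences of positive real numbers such that $\lim_{n\to\infty} A_n^{1/r_n}=\infty$ and $Q_nB_n\le Q_{n+1}B_{n+1}$ for all sufficiently large integers $n$. For each integer $n\ge 0$ let $$L_n(\underline{X})=\ell_{0n}X_0+\ell_{1n}X_1+\cdots+\ell_{r_n n}X_{r_n}$$ be a linear form with integer coefficients $\ell_{in}\in\mathbb{Z}$ in $r_n+1$ variables, and write $L_n(\underline{\xi})=\sum_{i=0}^{r_n}\ell_{in}\xi_i$. Assume that for all sufficiently large integers $n$, $$\sum_{i=0}^{r_n}|\ell_{in}|\le Q_n,\qquad 0<|L_n(\underline{\xi})|\le \frac{1}{A_n},\qquad \frac{|L_{n-1}(\underline{\xi})|}{|L_n(\underline{\xi})|}\le B_n.$$ Then $A_n\le 2^{r_n+1}(B_nQ_n)^{r_n}$ for all sufficiently large integers $n$. *)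

(* Defs.v *)
From Stdlib Require Import Reals Lra Lia ZArith.
Open Scope R_scope.

(* L_n(xi) = sum_{i=0}^{r_n} l_{i n} xi_i ; sum_f_R0 f m = f 0 + ... + f m *)
Definition Lxi (ell : nat -> nat -> Z) (xi : nat -> R) (r : nat -> nat) (n : nat) : R :=
  sum_f_R0 (fun i => IZR (ell i n) * xi i) (r n).

Definition norm1 (ell : nat -> nat -> Z) (r : nat -> nat) (n : nat) : R :=
  sum_f_R0 (fun i => Rabs (IZR (ell i n))) (r n).

(* Main.v *)
Require Import Defs.
From Stdlib Require Import Reals Lra Lia ZArith ClassicalEpsilon.
Open Scope R_scope.
Module Comb.
Close Scope R_scope.
From mathcomp Require Import all_boot.
Set Implicit Arguments. Unset Strict Implicit.

Section S.
Variables (r R s K : nat) (c : nat -> nat -> nat).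
Hypothesis R0 : 0 < R.
Hypothesis sR : s <= R.
Hypothesis big : R ^ r < K.+1 * s ^ r.

Definition T := {ffun 'I_r -> 'I_R}.
Definition U := {ffun 'I_r -> 'I_s}.
Definition f (q : 'I_K.+1) (u : U) : T := [ffun i => Ordinal (ltn_pmod (u i + c q i) R0)].
Definition B (q : 'I_K.+1) : {set T} := [set f q u | u in [set: U]].

Lemma f_inj q : injective (f q).
Proof.
move=> u1 u2 /ffunP H; apply/ffunP => i; move: (H i); rewrite !ffunE => /(congr1 val) /= E.
apply/val_inj => /=.
have : (u1 i == u2 i %[mod R]) by rewrite -(eqn_modDr (c q i)) E.
rewrite !modn_small //; first by move/eqP.
  by apply: leq_trans (ltn_ord _) sR.
by apply: leq_trans (ltn_ord _) sR.
Qed.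

Lemma cardB q : #|B q| = s ^ r.
Proof. rewrite card_imset; last exact: f_inj. rewrite cardsT card_ffun !card_ord. by []. Qed.

Lemma comb : exists (q1 q2 : 'I_K.+1) (u1 u2 : U), q1 != q2 /\ f q1 u1 = f q2 u2.
Proof.
have key : [exists t : T, 1 < #|[set q | t \in B q]|].
  apply: contraT; rewrite negb_exists => /forallP H.
  have H1 : forall t : T, #|[set q | t \in B q]| <= 1.
    by move=> t; rewrite leqNgt H.
  have : \sum_(t : T) #|[set q | t \in B q]| <= #|T|.
    rewrite -sum1_card; apply: leq_sum => t _; exact: H1.
  have -> : \sum_(t : T) #|[set q | t \in B q]| = \sum_(q : 'I_K.+1) #|B q|.
    transitivity (\sum_(t : T) \sum_(q : 'I_K.+1) ((t \in B q) : nat)).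
      apply: eq_bigr => t _; rewrite -sum1_card big_mkcond /=.
      by apply: eq_bigr => q _; rewrite inE; case: (t \in B q).
    rewrite exchange_big /=. apply: eq_bigr => q _.
    rewrite -sum1_card [RHS]big_mkcond /=; apply: eq_bigr => t _; by case: (t \in B q).
  rewrite (eq_bigr (fun _ => s ^ r)); last by move=> q _; apply: cardB.
  rewrite sum_nat_const card_ord card_ffun !card_ord => Hle.
  by move: big; rewrite ltnNge Hle.
case/existsP: key => t /card_gt1P [q1 [q2 [H1 H2 Hne]]].
move: H1 H2; rewrite !inE => /imsetP [u1 _ E1] /imsetP [u2 _ E2].
by exists q1, q2, u1, u2; split => //; rewrite -E1 -E2.
Qed.
End S.

Lemma modeq_Z (a b c1 c2 R : nat) : (a + c1) %% R = (b + c2) %% R ->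
  exists k : Z, (Z.of_nat c2 - Z.of_nat c1 = Z.of_nat a - Z.of_nat b + Z.of_nat R * k)%Z.
Proof.
move=> E.
have E1 := divn_eq (a + c1) R; have E2 := divn_eq (b + c2) R.
rewrite E in E1.
exists (Z.of_nat ((b + c2) %/ R) - Z.of_nat ((a + c1) %/ R))%Z.
move: E1 E2; rewrite -!plusE -!multE.
set m := (b + c2) %% R; set d1 := (a + c1) %/ R; set d2 := (b + c2) %/ R.
move=> E1 E2; nia.
Qed.

Lemma comb_peano (r R s K : nat) (c : nat -> nat -> nat) :
  lt 0 R -> le s R -> lt (Nat.pow R r) (Nat.mul (Nat.add K 1) (Nat.pow s r)) ->
  exists q1 q2 : nat, lt q1 q2 /\ le q2 K /\
   forall i, lt i r -> exists a b : nat, lt a s /\ lt b s /\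
     exists k : Z, (Z.of_nat (c q2 i) - Z.of_nat (c q1 i) = Z.of_nat a - Z.of_nat b + Z.of_nat R * k)%Z.
Proof.
move=> /ltP R0 /leP sR /ltP Hb.
have powE : forall x n, Nat.pow x n = x ^ n.
  by move=> x; elim=> [|n IH] //=; rewrite expnS IH.
rewrite !powE in Hb. have Hb2 : R ^ r < K.+1 * s ^ r by move: Hb; rewrite -[Nat.add K 1]/(K + 1) addn1.
have [q1 [q2 [u1 [u2 [Hne E]]]]] := comb c R0 sR Hb2.
have Hi : forall i (ir : i < r), (u1 (Ordinal ir) + c q1 i) %% R = (u2 (Ordinal ir) + c q2 i) %% R.
  move=> i ir; set io := Ordinal ir.
  have := congr1 (fun g : T r R => val (g io)) E; rewrite /f !ffunE /=.
  done.
case: (ltngtP q1 q2) => Hq; last by move/val_inj: Hq => Hq; rewrite Hq eqxx in Hne.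
- exists q1, q2; split; first by apply/ltP.
  split; first by apply/leP; rewrite -ltnS.
  move=> i /ltP ir; exists (u1 (Ordinal ir)), (u2 (Ordinal ir)); split; first by apply/ltP.
  split; first by apply/ltP.
  exact: modeq_Z (Hi i ir).
- exists q2, q1; split; first by apply/ltP.
  split; first by apply/leP; rewrite -ltnS.
  move=> i /ltP ir; exists (u2 (Ordinal ir)), (u1 (Ordinal ir)); split; first by apply/ltP.
  split; first by apply/ltP.
  exact: modeq_Z (esym (Hi i ir)).
Qed.
End Comb.

Open Scope R_scope.

Definition fl (x : R) : Z := (up x - 1)%Z.

Lemma fl_spec x : IZR (fl x) <= x < IZR (fl x) + 1.
Proof. unfold fl; rewrite minus_IZR; destruct (archimed x); lra. Qed.

Lemma fl_nonneg x : 0 <= x -> (0 <= fl x)%Z.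
Proof.
  intro H; destruct (fl_spec x) as [H1 H2].
  assert (-1 < IZR (fl x)) by lra.
  apply lt_IZR in H0; lia.
Qed.

Lemma INR_fl x : 0 <= x -> INR (Z.to_nat (fl x)) = IZR (fl x).
Proof. intro H; rewrite INR_IZR_INZ, Z2Nat.id; [reflexivity | apply fl_nonneg; auto]. Qed.

Lemma pow_lt_strict x y n : 0 <= x < y -> (1 <= n)%nat -> x ^ n < y ^ n.
Proof.
  intros [H0 H1] Hn. destruct n as [|m]; [lia|]. clear Hn.
  simpl. assert (x ^ m <= y ^ m) by (apply pow_incr; lra).
  assert (0 < y ^ m) by (apply pow_lt; lra).
  assert (0 <= x ^ m) by (apply pow_le; lra).
  nra.
Qed.

Lemma bern a b n : 0 <= b -> b <= a -> a <= 1 -> a ^ n - b ^ n <= INR n * (a - b).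
Proof.
  intros H0 H1 H2. induction n as [|n IH].
  - simpl; lra.
  - rewrite S_INR. simpl.
    assert (b ^ n <= a ^ n) by (apply pow_incr; lra).
    assert (b ^ n <= 1) by (rewrite <- (pow1 n); apply pow_incr; lra).
    assert (0 <= b ^ n) by (apply pow_le; lra).
    assert (0 <= INR n) by apply pos_INR.
    nra.
Qed.

Lemma dirichlet (r : nat) (th : nat -> R) (X eps : R) :
 (1 <= r)%nat -> 1 <= X -> 0 < eps -> eps < 1 -> 1 <= X * eps ^ r ->
 exists q : nat, (1 <= q)%nat /\ INR q <= X /\
   forall i, (1 <= i <= r)%nat -> exists p : Z, Rabs (INR q * th i - IZR p) <= eps.
Proof.
  intros Hr HX He0 He1 HXe.
  set (K := Z.to_nat (fl X)).
  assert (HK : INR K <= X < INR K + 1).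
  { unfold K; rewrite INR_fl by lra. apply fl_spec. }
  assert (Her : 0 < eps ^ r) by (apply pow_lt; lra).
  set (d := (INR K + 1) * eps ^ r - 1).
  assert (Hd : 0 < d) by (unfold d; nra).
  set (M := INR r * (INR K + 1) / d + 1 / eps).
  assert (HM0 : 0 <= INR r * (INR K + 1) / d).
  { unfold Rdiv; apply Rmult_le_pos; [apply Rmult_le_pos; [apply pos_INR| pose proof (pos_INR K); lra] | left; apply Rinv_0_lt_compat; lra]. }
  assert (HM1 : 0 < 1 / eps) by (unfold Rdiv; rewrite Rmult_1_l; apply Rinv_0_lt_compat; lra).
  set (R0 := Z.to_nat (up M)).
  assert (HR0 : M < INR R0).
  { unfold R0. destruct (archimed M) as [H1 H2].
    rewrite INR_IZR_INZ, Z2Nat.id; [lra|]. apply le_IZR; unfold M in *; lra. }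
  assert (HRpos : 0 < INR R0) by (unfold M in HR0; lra).
  assert (HReps : 1 < INR R0 * eps).
  { assert (1 / eps < INR R0) by (unfold M in HR0; lra).
    apply (Rmult_lt_compat_r eps) in H; [|lra]. unfold Rdiv in H.
    rewrite Rmult_assoc, Rinv_l, Rmult_1_r in H; lra. }
  set (s := Z.to_nat (fl (INR R0 * eps))).
  assert (Hs : INR s <= INR R0 * eps < INR s + 1).
  { unfold s; rewrite INR_fl by lra. apply fl_spec. }
  assert (HsR : (s <= R0)%nat).
  { apply INR_le. nra. }
  assert (HRnat : (0 < R0)%nat) by (apply INR_lt; simpl; lra).
  assert (Hcount : (R0 ^ r < (K + 1) * s ^ r)%nat).
  { set (b := INR s / INR R0).
    assert (Hb0 : 0 <= b) by (unfold b, Rdiv; apply Rmult_le_pos; [apply pos_INR| left; apply Rinv_0_lt_compat; lra]).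
    assert (HbR : b * INR R0 = INR s) by (unfold b; field; lra).
    assert (Hba : b <= eps) by nra.
    assert (Hab : eps - b < 1 / INR R0).
    { assert ((eps - b) * INR R0 < 1) by nra.
      apply (Rmult_lt_reg_r (INR R0)); [lra|]. unfold Rdiv; rewrite Rmult_assoc, Rinv_l; lra. }
    pose proof (bern eps b r Hb0 Hba (Rlt_le _ _ He1)) as Hbern.
    assert (HrK : INR r * (INR K + 1) / d < INR R0) by (unfold M in HR0; lra).
    assert (Hkey : 1 < (INR K + 1) * b ^ r).
    { assert (Hr0 : 0 <= INR r) by apply pos_INR.
      assert (INR r * (INR K + 1) < d * INR R0).
      { apply (Rmult_lt_compat_r d) in HrK; [|lra]. unfold Rdiv in HrK.
        rewrite Rmult_assoc, Rinv_l, Rmult_1_r in HrK; lra. }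
      assert (INR r * (eps - b) * INR R0 <= INR r * 1).
      { rewrite Rmult_assoc. apply Rmult_le_compat_l; [lra|].
        apply (Rmult_lt_compat_r (INR R0)) in Hab; [|lra]. unfold Rdiv in Hab.
        rewrite Rmult_assoc, Rinv_l in Hab; lra. }
      assert (HK0 : 0 < INR K + 1) by (pose proof (pos_INR K); lra).
      unfold d in *. nra. }
    apply INR_lt. rewrite mult_INR, !pow_INR, plus_INR. simpl (INR 1).
    rewrite <- HbR, Rpow_mult_distr.
    assert (0 < INR R0 ^ r) by (apply pow_lt; lra).
    nra. }
  set (frc := fun x => x - IZR (fl x)).
  set (c := fun (q i : nat) => Z.to_nat (fl (INR R0 * frc (INR q * th (S i))))).
  destruct (@Comb.comb_peano r R0 s K c HRnat HsR) as [q1 [q2 [Hq12 [Hq2 Hi]]]].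
  { exact Hcount. }
  exists (q2 - q1)%nat. split; [lia|]. split.
  { assert (INR (q2 - q1) <= INR K) by (apply le_INR; lia). lra. }
  intros i Hi1.
  destruct (Hi (i - 1)%nat ltac:(lia)) as [a [b [Ha [Hb [k Hk]]]]].
  unfold c in Hk. replace (S (i - 1)) with i in Hk by lia.
  set (y1 := INR q1 * th i) in *. set (y2 := INR q2 * th i) in *.
  exists (fl y2 - fl y1 + k)%Z.
  assert (Hf1 : 0 <= frc y1 < 1) by (unfold frc; pose proof (fl_spec y1); lra).
  assert (Hf2 : 0 <= frc y2 < 1) by (unfold frc; pose proof (fl_spec y2); lra).
  assert (HC1 := fl_spec (INR R0 * frc y1)).
  assert (HC2 := fl_spec (INR R0 * frc y2)).
  rewrite !Z2Nat.id in Hk by (apply fl_nonneg; apply Rmult_le_pos; [lra | unfold frc; match goal with |- 0 <= ?z - IZR (fl ?z) => pose proof (fl_spec z); lra end]).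
  apply (f_equal IZR) in Hk. rewrite plus_IZR, !minus_IZR, mult_IZR, <- !INR_IZR_INZ in Hk.
  assert (Ha' : INR a + 1 <= INR s) by (rewrite <- S_INR; apply le_INR; lia).
  assert (Hb' : INR b + 1 <= INR s) by (rewrite <- S_INR; apply le_INR; lia).
  assert (Ha0 := pos_INR a). assert (Hb0 := pos_INR b).
  rewrite minus_INR by lia.
  rewrite plus_IZR, minus_IZR.
  set (e := (INR q2 - INR q1) * th i - (IZR (fl y2) - IZR (fl y1) + IZR k)).
  assert (He : e = frc y2 - frc y1 - IZR k) by (unfold e, frc, y1, y2; ring).
  assert (HeR : e * INR R0 = INR R0 * frc y2 - INR R0 * frc y1 - INR R0 * IZR k) by (rewrite He; ring).
  apply Rabs_le. split.
  - apply (Rmult_le_reg_r (INR R0)); [lra|]. lra.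
  - apply (Rmult_le_reg_r (INR R0)); [lra|]. lra.
Qed.

Lemma int_sum (f : nat -> Z) m : exists z, sum_f_R0 (fun i => IZR (f i)) m = IZR z.
Proof.
  induction m as [|m [z Hz]]; simpl.
  - exists (f 0%nat); reflexivity.
  - exists (z + f (S m))%Z; rewrite Hz, plus_IZR; reflexivity.
Qed.

Lemma core (xi : nat -> R) (r : nat -> nat) (Q B : nat -> R) (ell : nat -> nat -> Z)
 (N0 n q : nat) (p : nat -> Z) (eps : R)
 (hxi0 : xi 0%nat = 1)
 (hN : (N0 <= n)%nat)
 (hrm : forall j, (j <= n)%nat -> (r j <= r n)%nat)
 (hQB : forall j, (N0 <= j <= n)%nat -> Q j * B j <= Q n * B n)
 (hQ : forall j, 0 < Q j) (hB : forall j, 0 < B j)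
 (hnorm : forall j, (N0 <= j)%nat -> norm1 ell r j <= Q j)
 (hpos : forall j, (N0 <= j)%nat -> 0 < Rabs (Lxi ell xi r j))
 (hrat : forall j, (N0 < j)%nat -> Rabs (Lxi ell xi r (j-1)) <= B j * Rabs (Lxi ell xi r j))
 (hq : (1 <= q)%nat) (he : 0 < eps)
 (hp : forall i, (1 <= i <= r n)%nat -> Rabs (INR q * xi i - IZR (p i)) <= eps)
 (hstart : INR q * Rabs (Lxi ell xi r n) <= 1/2)
 (heps : Q n * B n * eps <= 1/2) :
 1 <= eps * (Q N0 / Rabs (Lxi ell xi r N0) + 2 * Q N0).
Proof.
  set (pp := fun i => match i with 0%nat => Z.of_nat q | _ => p i end).
  set (Lx := fun j => sum_f_R0 (fun i => IZR (ell i j) * IZR (pp i)) (r j)).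
  assert (integ : forall j, exists z, Lx j = IZR z).
  { intro j. destruct (int_sum (fun i => (ell i j * pp i)%Z) (r j)) as [z Hz].
    exists z. rewrite <- Hz. unfold Lx. apply sum_eq. intros i _. rewrite mult_IZR; reflexivity. }
  assert (Hq1 : 1 <= INR q) by (apply (le_INR 1); lia).
  assert (err : forall j, (j <= n)%nat -> Rabs (Lx j - INR q * Lxi ell xi r j) <= eps * norm1 ell r j).
  { intros j Hj. unfold Lx, Lxi, norm1. rewrite scal_sum, <- minus_sum.
    eapply Rle_trans; [apply sum_f_R0_triangle|]. rewrite scal_sum. apply sum_Rle. intros i Hi.
    replace (IZR (ell i j) * IZR (pp i) - IZR (ell i j) * xi i * INR q)
      with (IZR (ell i j) * (IZR (pp i) - INR q * xi i)) by ring.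
    rewrite Rabs_mult. apply Rmult_le_compat_l; [apply Rabs_pos|].
    destruct i as [|i'].
    - simpl. rewrite hxi0, <- INR_IZR_INZ. replace (INR q - INR q * 1) with 0 by ring.
      rewrite Rabs_R0; lra.
    - simpl pp. rewrite Rabs_minus_sym. apply hp. pose proof (hrm j Hj). lia. }
  assert (step : forall j, (N0 <= j <= n)%nat -> INR q * Rabs (Lxi ell xi r j) <= 1/2 ->
     (Lx j = 0 -> INR q * Rabs (Lxi ell xi r j) <= eps * Q j) /\ (Lx j <> 0 -> 1/2 <= eps * Q j)).
  { intros j Hj Hs. pose proof (err j ltac:(lia)) as Herr. pose proof (hnorm j ltac:(lia)) as Hn.
    assert (Hen : eps * norm1 ell r j <= eps * Q j) by (apply Rmult_le_compat_l; lra).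
    split.
    - intro H0. rewrite H0 in Herr. rewrite Rminus_0_l, Rabs_Ropp, Rabs_mult, Rabs_right in Herr.
      + lra.
      + apply Rle_ge, pos_INR.
    - intro H0. destruct (integ j) as [z Hz].
      assert (Hz1 : 1 <= Rabs (Lx j)).
      { rewrite Hz, <- abs_IZR. apply IZR_le. assert (z <> 0%Z) by (intro; subst; apply H0; rewrite Hz; reflexivity). lia. }
      assert (Htri : Rabs (Lx j) <= Rabs (Lx j - INR q * Lxi ell xi r j) + Rabs (INR q * Lxi ell xi r j)).
      { replace (Lx j) with ((Lx j - INR q * Lxi ell xi r j) + INR q * Lxi ell xi r j) at 1 by ring.
        apply Rabs_triang. }
      rewrite Rabs_mult, (Rabs_right (INR q)) in Htri by (apply Rle_ge, pos_INR).
      lra. }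
  assert (inv : forall k, (k <= n - N0)%nat -> INR q * Rabs (Lxi ell xi r (n - k)) <= 1/2).
  { induction k as [|k IH]; intro Hk.
    - replace (n - 0)%nat with n by lia. exact hstart.
    - set (j := (n - k)%nat). assert (Hj : (N0 < j <= n)%nat) by (unfold j; lia).
      replace (n - S k)%nat with (j - 1)%nat by (unfold j; lia).
      specialize (IH ltac:(lia)). fold j in IH.
      destruct (step j ltac:(lia) IH) as [S0 S1].
      pose proof (hrat j ltac:(lia)) as Hr.
      pose proof (hQB j ltac:(lia)) as Hqb.
      pose proof (hQ j). pose proof (hB j). pose proof (hQ n). pose proof (hB n).
      assert (Hl0 : 0 <= Rabs (Lxi ell xi r j)) by apply Rabs_pos.
      assert (Hl1 : 0 <= Rabs (Lxi ell xi r (j-1))) by apply Rabs_pos.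
      assert (Hqr : INR q * Rabs (Lxi ell xi r (j - 1)) <= INR q * (B j * Rabs (Lxi ell xi r j)))
        by (apply Rmult_le_compat_l; lra).
      destruct (Req_dec (Lx j) 0) as [Hz|Hz].
      + specialize (S0 Hz).
        assert (INR q * (B j * Rabs (Lxi ell xi r j)) <= B j * (eps * Q j)).
        { replace (INR q * (B j * Rabs (Lxi ell xi r j))) with (B j * (INR q * Rabs (Lxi ell xi r j))) by ring.
          apply Rmult_le_compat_l; lra. }
        assert (B j * (eps * Q j) <= Q n * B n * eps).
        { replace (B j * (eps * Q j)) with ((Q j * B j) * eps) by ring.
          apply Rmult_le_compat_r; lra. }
        lra.
      + specialize (S1 Hz).
        assert (HB1 : B j <= 1).
        { assert (Q j * B j * eps <= Q n * B n * eps) by (apply Rmult_le_compat_r; lra).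
          nra. }
        assert (INR q * (B j * Rabs (Lxi ell xi r j)) <= INR q * Rabs (Lxi ell xi r j)).
        { apply Rmult_le_compat_l; [pose proof (pos_INR q); lra|]. nra. }
        lra. }
  pose proof (inv (n - N0)%nat ltac:(lia)) as H0.
  replace (n - (n - N0))%nat with N0 in H0 by lia.
  destruct (step N0 ltac:(lia) H0) as [S0 S1].
  pose proof (hpos N0 ltac:(lia)) as Hp. pose proof (hQ N0) as HQ0.
  assert (Hdiv : 0 <= Q N0 / Rabs (Lxi ell xi r N0)).
  { unfold Rdiv; apply Rmult_le_pos; [lra| left; apply Rinv_0_lt_compat; lra]. }
  destruct (Req_dec (Lx N0) 0) as [Hz|Hz].
  - specialize (S0 Hz).
    assert (Rabs (Lxi ell xi r N0) <= eps * Q N0).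
    { eapply Rle_trans; [|exact S0]. pose proof (Rabs_pos (Lxi ell xi r N0)). nra. }
    assert (1 <= eps * (Q N0 / Rabs (Lxi ell xi r N0))).
    { replace (eps * (Q N0 / Rabs (Lxi ell xi r N0))) with ((eps * Q N0) / Rabs (Lxi ell xi r N0)) by (field; lra).
      apply (Rmult_le_reg_r (Rabs (Lxi ell xi r N0))); [lra|].
      unfold Rdiv; rewrite Rmult_assoc, Rinv_l; lra. }
    nra.
  - specialize (S1 Hz). nra.
Qed.

Lemma inv_pow_ge (X y : R) (n : nat) : 0 < y -> y ^ n <= X -> 1 <= X * (1 / y) ^ n.
Proof.
  intros Hy H.
  assert (E : y ^ n * (1 / y) ^ n = 1).
  { rewrite <- Rpow_mult_distr. replace (y * (1 / y)) with 1 by (field; lra). apply pow1. }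
  assert (0 < (1 / y) ^ n) by (apply pow_lt; unfold Rdiv; rewrite Rmult_1_l; apply Rinv_0_lt_compat; lra).
  nra.
Qed.

Theorem mainTheorem1
  (xi : nat -> R) (r : nat -> nat) (Q A B : nat -> R) (ell : nat -> nat -> Z)
  (hxi0 : xi 0%nat = 1)
  (hr_pos : forall n, (0 < r n)%nat)
  (hr_mono : forall n, (r n <= r (S n))%nat)
  (hQ : forall n, 0 < Q n) (hA : forall n, 0 < A n) (hB : forall n, 0 < B n)
  (hAlim : cv_infty (fun n => Rpower (A n) (1 / INR (r n))))
  (hQB : exists N, forall n, (N <= n)%nat -> Q n * B n <= Q (S n) * B (S n))
  (hnorm : exists N, forall n, (N <= n)%nat -> norm1 ell r n <= Q n)
  (hL : exists N, forall n, (N <= n)%nat ->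
          0 < Rabs (Lxi ell xi r n) /\ Rabs (Lxi ell xi r n) <= 1 / A n)
  (hratio : exists N, forall n, (N <= n)%nat ->
          Rabs (Lxi ell xi r n) / Rabs (Lxi ell xi r (S n)) <= B (S n)) :
  exists N, forall n, (N <= n)%nat ->
    A n <= 2 ^ (S (r n)) * (B n * Q n) ^ (r n).
Proof.
  destruct hQB as [N1 HQB]. destruct hnorm as [N2 Hn]. destruct hL as [N3 HL].
  destruct hratio as [N4 Hrat].
  set (N0 := (N1 + N2 + N3 + N4 + 1)%nat).
  assert (Hp0 : 0 < Rabs (Lxi ell xi r N0)) by (apply (HL N0); unfold N0; lia).
  set (C := Q N0 / Rabs (Lxi ell xi r N0) + 2 * Q N0).
  assert (HC : 0 < C).
  { unfold C. pose proof (hQ N0).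
    assert (0 <= Q N0 / Rabs (Lxi ell xi r N0)) by (unfold Rdiv; apply Rmult_le_pos; [lra | left; apply Rinv_0_lt_compat; lra]).
    lra. }
  destruct (hAlim (2 * (C + 1))) as [N5 H5].
  assert (hrm0 : forall n j, (j <= n)%nat -> (r j <= r n)%nat).
  { intros n j Hj. induction Hj as [|m Hm IH]; [lia|]. pose proof (hr_mono m). lia. }
  assert (hqb0 : forall N0' n, (N1 <= N0')%nat -> forall j, (N0' <= j <= n)%nat -> Q j * B j <= Q n * B n).
  { intros N0' n HN j [Hj1 Hj2]. induction Hj2 as [|m Hm IH]; [lra|].
    pose proof (HQB m ltac:(lia)). lra. }
  exists (N0 + N5)%nat. intros n Hn0.
  assert (hrm : forall j, (j <= n)%nat -> (r j <= r n)%nat) by (intros j Hj; apply hrm0; exact Hj). assert (hqb := hqb0 N0 n ltac:(unfold N0; lia)).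
  destruct (Rle_or_lt (A n) (2 ^ S (r n) * (B n * Q n) ^ r n)) as [ok|bad]; [exact ok|exfalso].
  set (rho := r n) in *.
  assert (Hrho : (1 <= rho)%nat) by (apply hr_pos).
  set (P := B n * Q n) in *.
  assert (HP : 0 < P) by (unfold P; pose proof (hB n); pose proof (hQ n); nra).
  pose proof (hA n) as HAn.
  assert (HAbig : (2 * (C + 1)) ^ rho < A n).
  { specialize (H5 n ltac:(lia)). simpl in H5. fold rho in H5.
    assert (Hpw : Rpower (A n) (1 / INR rho) ^ rho = A n).
    { rewrite <- Rpower_pow by (unfold Rpower; apply exp_pos).
      rewrite Rpower_mult. replace (1 / INR rho * INR rho) with 1.
      - apply Rpower_1; lra.
      - assert (0 < INR rho) by (apply (lt_INR 0); lia). field; lra. }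
    rewrite <- Hpw. apply pow_lt_strict; [lra | exact Hrho]. }
  assert (H2C : 2 * (C + 1) ^ rho <= (2 * (C + 1)) ^ rho).
  { rewrite Rpow_mult_distr. assert (2 ^ 1 <= 2 ^ rho) by (apply Rle_pow; [lra|lia]).
    assert (1 <= (C + 1) ^ rho) by (apply pow_R1_Rle; lra). simpl in H. nra. }
  set (X := A n / 2).
  set (eps := Rmin (1 / (2 * P)) (1 / (C + 1))).
  assert (HC1 : 1 <= (C + 1) ^ rho) by (apply pow_R1_Rle; lra).
  assert (HX : 1 <= X) by (unfold X; lra).
  assert (Heps0 : 0 < eps).
  { unfold eps. apply Rmin_glb_lt; unfold Rdiv; rewrite Rmult_1_l; apply Rinv_0_lt_compat; lra. }
  assert (HepsC : eps <= 1 / (C + 1)) by apply Rmin_r.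
  assert (HepsP : eps <= 1 / (2 * P)) by apply Rmin_l.
  assert (HC1' : 1 / (C + 1) < 1).
  { apply (Rmult_lt_reg_r (C + 1)); [lra|]. unfold Rdiv. rewrite Rmult_assoc, Rinv_l; lra. }
  assert (HXe : 1 <= X * eps ^ rho).
  { unfold eps. destruct (Rle_dec (1 / (2 * P)) (1 / (C + 1))) as [Hle|Hle].
    - rewrite Rmin_left by exact Hle. apply inv_pow_ge; [lra|].
      unfold X. assert (2 ^ S rho * P ^ rho = 2 * (2 * P) ^ rho) by (rewrite Rpow_mult_distr; simpl; ring). lra.
    - rewrite Rmin_right by lra. apply inv_pow_ge; [lra|]. unfold X. lra. }
  destruct (dirichlet rho xi X eps Hrho HX Heps0 ltac:(lra) HXe) as [q [Hq1 [HqX Hpex]]].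
  assert (Hex : forall i, exists z : Z, (1 <= i <= rho)%nat -> Rabs (INR q * xi i - IZR z) <= eps).
  { intro i. destruct (le_dec 1 i) as [h1|h1]; [destruct (le_dec i rho) as [h2|h2]|].
    - destruct (Hpex i ltac:(lia)) as [z Hz]. exists z; intros _; exact Hz.
    - exists 0%Z; intro; lia.
    - exists 0%Z; intro; lia. }
  set (p := fun i => proj1_sig (constructive_indefinite_description _ (Hex i))).
  assert (Hp : forall i, (1 <= i <= rho)%nat -> Rabs (INR q * xi i - IZR (p i)) <= eps).
  { intros i Hi. unfold p. destruct (constructive_indefinite_description _ (Hex i)) as [z Hz]. simpl. auto. }
  assert (Hcore := core xi r Q B ell N0 n q p eps hxi0 ltac:(unfold N0 in *; lia) hrm hqb hQ hB).
  assert (Hres : 1 <= eps * C).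
  { apply Hcore.
    - intros j Hj. apply Hn. unfold N0 in *; lia.
    - intros j Hj. apply (HL j). unfold N0 in *; lia.
    - intros j Hj. pose proof (Hrat (j - 1)%nat ltac:(unfold N0 in *; lia)) as Hr.
      replace (S (j - 1)) with j in Hr by lia.
      pose proof (proj1 (HL j ltac:(unfold N0 in *; lia))) as Hpj.
      apply (Rmult_le_compat_r (Rabs (Lxi ell xi r j))) in Hr; [|lra].
      unfold Rdiv in Hr. rewrite Rmult_assoc, Rinv_l, Rmult_1_r in Hr; lra.
    - exact Hq1.
    - exact Heps0.
    - exact Hp.
    - destruct (HL n ltac:(unfold N0 in *; lia)) as [_ HLn].
      assert (Hq0 : 0 <= INR q) by apply pos_INR.
      assert (INR q * Rabs (Lxi ell xi r n) <= X * (1 / A n)).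
      { apply Rmult_le_compat; [lra | apply Rabs_pos | lra | lra]. }
      replace (X * (1 / A n)) with (1/2) in H by (unfold X; field; lra). lra.
    - replace (Q n * B n * eps) with (eps * P) by (unfold P; ring). replace (1/2) with ((1 / (2 * P)) * P) by (field; lra).
      apply Rmult_le_compat_r; lra. }
  assert (eps * C <= 1 / (C + 1) * C) by (apply Rmult_le_compat_r; lra).
  assert (1 / (C + 1) * C < 1).
  { apply (Rmult_lt_reg_r (C + 1)); [lra|]. replace (1 / (C + 1) * C * (C + 1)) with C by (field; lra). lra. }
  lra.
Qed.
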